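(* If $X\subset\mathbb{R}^2$ is a planar self-affine set satisfying the strong separation condition, then $$\sup_{x\in X,\ V\in\mathbb{RP}^1}\dim_H\big(X\cap(V+x)\big)<1.$$
   Context: An affine iterated function system is a tuple $(\varphi_1,\dots,\varphi_N)$, $N\ge2$, with $\varphi_i(x)=A_ix+v_i$, $A_i\in GL_2(\mathbb{R})$, $\|A_i\|<1$; its self-affine set $X$ is the unique nonempty compact set with $X=\bigcup_i\varphi_i(X)$. Strong separation condition: $\varphi_i(X)\cap\varphi_j(X)=\emptyset$ for $i\ne j$. $\mathbb{RP}^1$ is the set of lines through the origin; $V+x$ is the translate of $V$ by $x$; $\dim_H$ is Hausdorff dimension. *)

(* Defs.v *)
From HB Require Import structures.
From mathcomp Require Import all_boot all_order all_algebra.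
From mathcomp Require Import all_classical all_reals all_analysis.
Set Implicit Arguments. Unset Strict Implicit. Unset Printing Implicit Defensive.
Import Order.TTheory GRing.Theory Num.Theory.
Import numFieldNormedType.Exports.
Local Open Scope classical_set_scope.
Local Open Scope ring_scope.

Definition enorm (R : realType) (p : 'cV[R]_2) : R :=
  Num.sqrt (\sum_(i < 2) (p i 0) ^+ 2).
Definition edist (R : realType) (p q : 'cV[R]_2) : R := enorm (p - q).

Definition opnorm (R : realType) (A : 'M[R]_2) : R :=
  sup [set enorm (A *m x) | x in [set x : 'cV[R]_2 | enorm x = 1]].

Definition diam (R : realType) (U : set 'cV[R]_2) : R :=
  sup [set edist p q | p in U & q in U].

(* s-cost of a countable cover, with the convention diam(empty)^s = 0. *)
Definition cover_cost (R : realType) (s : R) (U : nat -> set 'cV[R]_2) : \bar R :=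
  (\sum_(0 <= n <oo) (if pselect (U n = set0) then 0 else diam (U n) `^ s)%:E)%E.

Definition delta_cover (R : realType) (delta : R) (A : set 'cV[R]_2)
    (U : nat -> set 'cV[R]_2) : Prop :=
  A `<=` \bigcup_n U n /\
  forall n p q, U n p -> U n q -> edist p q <= delta.

Definition hausdorff_delta (R : realType) (s delta : R) (A : set 'cV[R]_2) : \bar R :=
  ereal_inf [set cover_cost s U | U in delta_cover delta A].

Definition hausdorff_measure (R : realType) (s : R) (A : set 'cV[R]_2) : \bar R :=
  ereal_sup [set hausdorff_delta s delta A | delta in [set d : R | 0 < d]].

Definition dimH (R : realType) (A : set 'cV[R]_2) : \bar R :=
  ereal_inf [set s%:E | s in [set s : R | 0 <= s /\ hausdorff_measure s A = 0%E]].

Definition affine_map (R : realType) (A : 'M[R]_2) (v : 'cV[R]_2) (x : 'cV[R]_2)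
  : 'cV[R]_2 := A *m x + v.

(* The line through the origin spanned by u (an element of RP^1 when u != 0). *)
Definition line_through0 (R : realType) (u : 'cV[R]_2) : set 'cV[R]_2 :=
  [set t *: u | t in [set: R]].

Definition translate (R : realType) (V : set 'cV[R]_2) (x : 'cV[R]_2) : set 'cV[R]_2 :=
  [set y + x | y in V].

(* Main.v *)
Require Import Defs.
From HB Require Import structures.
From mathcomp Require Import all_boot all_order all_algebra.
From mathcomp Require Import all_classical all_reals all_analysis.
From mathcomp Require Import ring lra.
Import Order.TTheory GRing.Theory Num.Theory.
Import numFieldNormedType.Exports.
Local Open Scope classical_set_scope.
Local Open Scope ring_scope.
Set Implicit Arguments. Unset Strict Implicit. Unset Printing Implicit Defensive.
Notation edist := Defs.edist.
Section Basics.
Variable R : realType.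
Implicit Types p q u : 'cV[R]_2.

Lemma sum2 (F : 'I_2 -> R) : \sum_(i < 2) F i = F ord0 + F (lift ord0 ord0).
Proof. by rewrite big_ord_recl big_ord1. Qed.

Lemma enorm_ge0 p : 0 <= enorm p.
Proof. exact: sqrtr_ge0. Qed.

Lemma sumsq_ge0 p : 0 <= \sum_(i < 2) p i 0 ^+ 2.
Proof. by apply: sumr_ge0 => i _; rewrite sqr_ge0. Qed.

Lemma enormZ (t : R) p : enorm (t *: p) = `|t| * enorm p.
Proof.
rewrite /enorm.
have -> : \sum_(i < 2) (t *: p) i 0 ^+ 2 = t ^+ 2 * \sum_(i < 2) p i 0 ^+ 2.
  by rewrite mulr_sumr; apply: eq_bigr => i _; rewrite mxE exprMn.
by rewrite sqrtrM ?sqr_ge0 // sqrtr_sqr.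
Qed.

Lemma enormN p : enorm (- p) = enorm p.
Proof. by rewrite -scaleN1r enormZ normrN1 mul1r. Qed.

Lemma edistC p q : edist p q = edist q p.
Proof. by rewrite /edist -enormN opprB. Qed.

Lemma edist_ge0 p q : 0 <= edist p q.
Proof. exact: enorm_ge0. Qed.

Lemma edistxx p : edist p p = 0.
Proof. by rewrite /edist subrr; have := enormZ 0 p; rewrite scale0r normr0 mul0r. Qed.

Lemma enorm_eq0 p : enorm p = 0 -> p = 0.
Proof.
rewrite /enorm => /eqP; rewrite sqrtr_eq0 => H.
have H0 : \sum_(i < 2) p i 0 ^+ 2 = 0.
  by apply/eqP; rewrite eq_le H sumsq_ge0.
apply/matrixP => i j; rewrite (ord1 j) mxE.
move: H0; rewrite sum2 => /eqP; rewrite paddr_eq0 ?sqr_ge0 // => /andP[].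
rewrite !sqrf_eq0 => /eqP h0 /eqP h1.
by case: i => [[|[|k]] Hk] //=; [rewrite -h0; congr (p _ _); apply: val_inj|
  rewrite -h1; congr (p _ _); apply: val_inj].
Qed.

Lemma edist_eq0 p q : edist p q = 0 -> p = q.
Proof. by move=> /enorm_eq0 /eqP; rewrite subr_eq0 => /eqP. Qed.

Lemma coord_le_enorm p i : `|p i 0| <= enorm p.
Proof.
rewrite /enorm -sqrtr_sqr ler_sqrt ?sumsq_ge0 //.
rewrite (bigD1 i) //= lerDl; apply: sumr_ge0 => j _; exact: sqr_ge0.
Qed.

Lemma enorm_le_sum p : enorm p <= \sum_(i < 2) `|p i 0|.
Proof.
rewrite /enorm -(@ger0_norm _ (\sum_(i < 2) `|p i 0|)); last first.
  by apply: sumr_ge0 => i _.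
rewrite -sqrtr_sqr ler_sqrt ?sqr_ge0 // !sum2 sqrrD.
rewrite !real_normK ?num_real //.
have := mulr_ge0 (normr_ge0 (p ord0 0)) (normr_ge0 (p (lift ord0 ord0) 0)).
rewrite mulr2n; lra.
Qed.

Lemma edist_line (t t' : R) p u :
  edist (t *: u + p) (t' *: u + p) = `|t - t'| * enorm u.
Proof.
rewrite /Defs.edist -enormZ; congr enorm; by rewrite scalerBl opprD addrACA subrr addr0.
Qed.

End Basics.
Section Diam.
Variable R : realType.
Implicit Types p q u : 'cV[R]_2.
Implicit Types U : set 'cV[R]_2.

Lemma enorm0 : enorm (0 : 'cV[R]_2) = 0.
Proof. by have := enormZ 0 (0 : 'cV[R]_2); rewrite scale0r normr0 mul0r. Qed.

Lemma mx_apply_bound (A : 'M[R]_2) x :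
  enorm (A *m x) <= (\sum_(k < 2) \sum_(j < 2) `|A k j|) * enorm x.
Proof.
apply: (le_trans (enorm_le_sum _)); rewrite mulr_suml; apply: ler_sum => k _.
rewrite mxE mulr_suml; apply: (le_trans (ler_norm_sum _ _ _)); apply: ler_sum => j _.
by rewrite normrM ler_wpM2l // coord_le_enorm.
Qed.

Lemma opnorm_bound (A : 'M[R]_2) x : enorm (A *m x) <= opnorm A * enorm x.
Proof.
set M := \sum_(k < 2) \sum_(j < 2) `|A k j|.
have hs : has_sup [set enorm (A *m y) | y in [set y : 'cV[R]_2 | enorm y = 1]].
  split.
    have w0 : enorm (const_mx 1 : 'cV[R]_2) != 0.
      apply/eqP => /enorm_eq0 /matrixP /(_ ord0 ord0); rewrite !mxE.
      by move/eqP; rewrite oner_eq0.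
    exists (enorm (A *m ((enorm (const_mx 1 : 'cV[R]_2))^-1 *: const_mx 1))).
    exists ((enorm (const_mx 1 : 'cV[R]_2))^-1 *: const_mx 1) => //=.
    rewrite enormZ ger0_norm ?invr_ge0 ?enorm_ge0 // mulVf //.
  exists M => _ [y /= y1 <-]; have := mx_apply_bound A y; rewrite y1 mulr1 //.
have [->|x0] := eqVneq x 0.
  by rewrite mulmx0 enorm0 mulr0.
have c0 : 0 < enorm x.
  rewrite lt_neqAle enorm_ge0 andbT eq_sym; apply/eqP => /enorm_eq0 /eqP.
  by rewrite (negbTE x0).
set y := (enorm x)^-1 *: x.
have y1 : enorm y = 1 by rewrite enormZ ger0_norm ?invr_ge0 ?enorm_ge0 // mulVf // gt_eqF.
have xe : x = enorm x *: y by rewrite /y scalerA mulfV ?gt_eqF // scale1r.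
rewrite {1}xe -scalemxAr enormZ ger0_norm ?enorm_ge0 // mulrC ler_wpM2r ?enorm_ge0 //.
by apply: sup_upper_bound => //; exists y.
Qed.

Definition bnd U (M : R) := forall p q, U p -> U q -> edist p q <= M.

Lemma diam_hs U M : bnd U M -> U !=set0 ->
  has_sup [set edist p q | p in U & q in U].
Proof.
move=> hb [p Up]; split; first by exists (edist p p); exists p => //; exists p.
by exists M => _ [a Ua [b Ub <-]]; apply: hb.
Qed.

Lemma diam_ub U M p q : bnd U M -> U p -> U q -> edist p q <= diam U.
Proof.
move=> hb Up Uq; apply: sup_upper_bound; first by apply: (diam_hs hb); exists p.
by exists p => //; exists q.
Qed.

Lemma diam_le U M : U !=set0 -> bnd U M -> diam U <= M.
Proof.
move=> [p Up] hb; apply: ge_sup; first by exists (edist p p); exists p => //; exists p.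
by move=> _ [a Ua [b Ub <-]]; apply: hb.
Qed.

Lemma diam_set0 : diam (set0 : set 'cV[R]_2) = 0.
Proof.
rewrite /diam; have -> : [set edist p q | p in (set0 : set 'cV[R]_2) & q in set0] = set0.
  by apply/seteqP; split => // _ [a []].
by rewrite sup0.
Qed.

Lemma diam_ge0 U M : bnd U M -> 0 <= diam U.
Proof.
move=> hb; have [->|/set0P [p Up]] := eqVneq U set0.
  by rewrite diam_set0.
by apply: (le_trans _ (diam_ub hb Up Up)); rewrite edistxx.
Qed.

Lemma bnd_sub U V M : U `<=` V -> bnd V M -> bnd U M.
Proof. by move=> UV hb p q Up Uq; apply: hb; apply: UV. Qed.

Lemma diam_sub U V M : U `<=` V -> bnd V M -> diam U <= diam V.
Proof.
move=> UV hb; have [->|U0] := eqVneq U set0.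
  by rewrite diam_set0; apply: diam_ge0 hb.
apply: diam_le; first by apply/set0P.
by move=> p q Up Uq; apply: (diam_ub hb); apply: UV.
Qed.

End Diam.
Section RealIneq.
Variable R : realType.

Lemma tangent_powR (y s : R) : 0 <= y -> 0 < s < 1 -> y `^ s <= s * y + (1 - s).
Proof.
move=> y0 /andP[s0 s1].
have s1' : 0 < 1 - s by rewrite subr_gt0.
have := @conjugate_powR R (y `^ s) 1 s^-1 (1 - s)^-1 (powR_ge0 _ _) ler01
  ltac:(by rewrite invr_gt0) ltac:(by rewrite invr_gt0) ltac:(by rewrite !invrK addrC subrK).
rewrite mulr1 -powRrM mulfV ?gt_eqF // powRr1 // powR1 !invrK mul1r.
by rewrite mulrC.
Qed.

Lemma key_ineq (a b d D : R) : 0 <= a -> 0 <= b -> 0 < d -> a + b + d <= D ->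
  a `^ (D / (D + d)) + b `^ (D / (D + d)) <= (a + b + d) `^ (D / (D + d)).
Proof.
move=> a0 b0 d0 hD.
set M := a + b + d.
have M0 : 0 < M by rewrite /M; lra.
have D0 : 0 < D by apply: lt_le_trans hD.
set s := D / (D + d).
have Dd0 : 0 < D + d by rewrite addr_gt0.
have s0 : 0 < s by rewrite divr_gt0.
have s1 : s < 1 by rewrite /s ltr_pdivrMr // mul1r ltrDl.
have s01 : 0 < s < 1 by rewrite s0 s1.
have ea : a = (a / M) * M by rewrite mulfVK ?gt_eqF.
have eb : b = (b / M) * M by rewrite mulfVK ?gt_eqF.
have pa : a `^ s = (a / M) `^ s * M `^ s.
  by rewrite -powRM ?divr_ge0 ?(ltW M0) // -ea.
have pb : b `^ s = (b / M) `^ s * M `^ s.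
  by rewrite -powRM ?divr_ge0 ?(ltW M0) // -eb.
rewrite pa pb.
rewrite -mulrDl -[X in _ <= X]mul1r ler_wpM2r ?powR_ge0 //.
have ha := tangent_powR (divr_ge0 a0 (ltW M0)) s01.
have hb := tangent_powR (divr_ge0 b0 (ltW M0)) s01.
apply: (le_trans (lerD ha hb)).
have e1 : s * (a / M) + (1 - s) + (s * (b / M) + (1 - s)) = 2 - s - s * d / M.
  by rewrite /M; field; rewrite gt_eqF.
rewrite e1.
have e2 : (1 - s) * D = s * d by rewrite /s; field; rewrite gt_eqF.
have h3 : 1 - s <= s * d / M.
  rewrite ler_pdivlMr // -e2; apply: ler_wpM2l; last exact: hD.
  by rewrite subr_ge0 ltW.
lra.
Qed.

Lemma exists_pow_small (l eta : R) : 0 <= l < 1 -> 0 < eta ->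
  exists n : nat, l ^+ n <= eta.
Proof.
move=> /andP[l0 l1] e0.
have hl : `|l| < 1 by rewrite ger0_norm.
have [N _ HN] := cvgr0_norm_lt _ (cvg_expr hl) _ e0.
exists N; have := HN N (leqnn N); rewrite /= normrX ger0_norm // => h.
exact: ltW.
Qed.

End RealIneq.
Section Split.
Variable R : realType.
Implicit Types p q u : 'cV[R]_2.

Definition Lset p u : set 'cV[R]_2 := translate (line_through0 u) p.

Lemma LsetP p u z : Lset p u z <-> exists t, z = t *: u + p.
Proof.
split; first by move=> [_ [t _ <-] <-]; exists t.
by move=> [t ->]; exists (t *: u) => //; exists t.
Qed.

Lemma split1D (T : set R) (P : R -> Prop) (d t1 t2 : R) :
  0 < d -> T t1 -> P t1 -> T t2 -> ~ P t2 -> t1 < t2 ->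
  (forall a b, T a -> T b -> P a -> ~ P b -> d <= `|a - b|) ->
  exists e, t1 <= e /\ e + d <= t2 /\ forall t, T t -> t <= e \/ e + d <= t.
Proof.
move=> d0 Tt1 Pt1 Tt2 nPt2 t12 hsep.
pose E := [set t | T t /\ t1 <= t <= t2 /\ P t].
have E1 : E t1 by split => //; split => //; rewrite lexx ltW.
have hs : has_sup E by split; [exists t1 | exists t2 => t [_ [/andP[_ ->] _]]].
set e := sup E.
have te : t1 <= e by apply: sup_upper_bound.
have key : forall t, T t -> ~ P t -> (forall y, E y -> y <= t) -> e + d <= t.
  move=> t Tt nPt hb; rewrite -lerBrDr; apply: ge_sup; first by exists t1.
  move=> y Ey; have := hsep y t Ey.1 Tt Ey.2.2 nPt.
  have := hb y Ey; rewrite lerBrDr => yt.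
  by rewrite distrC ger0_norm ?subr_ge0 // lerBrDl addrC.
have h2 : e + d <= t2.
  by apply: key => // y [_ [/andP[_ ->] _]].
exists e; split => //; split => // t Tt.
have [te'|et] := leP t e; first by left.
right; have [tt2|t2t] := leP t t2; last by apply: (le_trans h2); exact: ltW.
apply: key => //.
  move=> Pt; have : E t by split => //; split => //; rewrite tt2 andbT (le_trans te) // ltW.
  by move=> /(sup_upper_bound hs); rewrite leNgt et.
by move=> y Ey; apply: (le_trans (sup_upper_bound hs Ey)); exact: ltW.
Qed.

Lemma absB_le (x y : R) : x <= y -> `|x - y| = y - x.
Proof. by move=> xy; rewrite distrC ger0_norm // subr_ge0. Qed.

Lemma split2D_dir (Q Y : set 'cV[R]_2) p u (t1 t2 dl : R) :
  0 < dl -> u != 0 -> t1 < t2 ->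
  Q `<=` Lset p u ->
  Q (t1 *: u + p) -> Y (t1 *: u + p) -> Q (t2 *: u + p) -> ~ Y (t2 *: u + p) ->
  (forall a b, Q a -> Q b -> Y a -> ~ Y b -> dl <= edist a b) ->
  exists Ql Qr : set 'cV[R]_2, [/\ Ql `<=` Q /\ Qr `<=` Q, Ql !=set0, Qr !=set0,
    Q `<=` Ql `|` Qr &
    forall a a' b b', Ql a -> Ql a' -> Qr b -> Qr b' ->
      exists c c', [/\ Q c, Q c' & edist a a' + edist b b' + dl <= edist c c']].
Proof.
move=> dl0 u0 t12 QL Q1 Y1 Q2 nY2 hsep.
have en0 : 0 < enorm u.
  rewrite lt_neqAle enorm_ge0 andbT eq_sym; apply/eqP => /enorm_eq0 /eqP.
  by rewrite (negbTE u0).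
pose T := [set t | Q (t *: u + p)].
pose P := fun t => Y (t *: u + p).
have [e [te [et2 hTe]]] : exists e, t1 <= e /\ e + dl / enorm u <= t2 /\
   forall t, T t -> t <= e \/ e + dl / enorm u <= t.
  apply: (@split1D T P) => //; first by rewrite divr_gt0.
  move=> a b Ta Tb Pa nPb; have := hsep _ _ Ta Tb Pa nPb.
  by rewrite edist_line ler_pdivrMr.
pose Ql := [set z | Q z /\ exists t, z = t *: u + p /\ t <= e].
pose Qr := [set z | Q z /\ exists t, z = t *: u + p /\ e + dl / enorm u <= t].
exists Ql, Qr; split.
- by split => z [].
- by exists (t1 *: u + p); split => //; exists t1.
- by exists (t2 *: u + p); split => //; exists t2.
- move=> z Qz; have /LsetP [t zt] := QL _ Qz.
  have Tt : T t by rewrite /T /= -zt.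
  by case: (hTe t Tt) => h; [left|right]; split => //; exists t.
- move=> a a' b b' [Qa [ta [ea ha]]] [Qa' [ta' [ea' ha']]]
    [Qb [tb [eb hb]]] [Qb' [tb' [eb' hb']]]; subst a a' b b'.
  have dd : dl = dl / enorm u * enorm u by rewrite mulfVK ?gt_eqF.
  rewrite !edist_line.
  have [tl [Qtl [tll h1]]] : exists tl, Q (tl *: u + p) /\ tl <= e /\ `|ta - ta'| <= e - tl.
    case: (leP ta ta') => h.
      by exists ta; split => //; split => //; rewrite absB_le // lerD2r.
    by exists ta'; split => //; split => //; rewrite distrC absB_le ?lerD2r // ltW.
  have [th [Qth [thh h2]]] : exists th, Q (th *: u + p) /\ e + dl / enorm u <= th /\
      `|tb - tb'| <= th - (e + dl / enorm u).
    case: (leP tb tb') => h.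
      by exists tb'; split => //; split => //; rewrite absB_le // lerD2l lerN2.
    by exists tb; split => //; split => //; rewrite distrC absB_le ?lerD2l ?lerN2 // ltW.
  exists (tl *: u + p), (th *: u + p); split => //.
  rewrite edist_line [X in _ + X <= _]dd -!mulrDl ler_wpM2r ?enorm_ge0 //.
  have dpos : 0 < dl / enorm u by rewrite divr_gt0.
  have tlh : tl <= th by lra.
  rewrite (absB_le tlh); lra.
Qed.

End Split.
Section Split2.
Variable R : realType.
Implicit Types p q u : 'cV[R]_2.

Lemma split2D (Q Y : set 'cV[R]_2) p u (dl : R) q1 q2 :
  0 < dl -> u != 0 ->
  Q `<=` Lset p u ->
  Q q1 -> Y q1 -> Q q2 -> ~ Y q2 ->
  (forall a b, Q a -> Q b -> Y a -> ~ Y b -> dl <= edist a b) ->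
  exists Ql Qr : set 'cV[R]_2, [/\ Ql `<=` Q /\ Qr `<=` Q, Ql !=set0, Qr !=set0,
    Q `<=` Ql `|` Qr &
    forall a a' b b', Ql a -> Ql a' -> Qr b -> Qr b' ->
      exists c c', [/\ Q c, Q c' & edist a a' + edist b b' + dl <= edist c c']].
Proof.
move=> dl0 u0 QL Q1 Y1 Q2 nY2 hsep.
have /LsetP [t1 e1] := QL _ Q1; have /LsetP [t2 e2] := QL _ Q2.
subst q1 q2.
have [t12|t21|t12] := ltgtP t1 t2.
- exact: (split2D_dir dl0 u0 t12 QL Q1 Y1 Q2 nY2 hsep).
- have u0' : - u != 0 by rewrite oppr_eq0.
  have QL' : Q `<=` Lset p (- u).
    move=> z /QL /LsetP [t ->]; apply/LsetP; exists (- t).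
    by rewrite scalerN scaleNr opprK.
  have e : forall t, t *: u + p = (- t) *: (- u) + p.
    by move=> t; rewrite scalerN scaleNr opprK.
  have Q1' : Q ((- t1) *: (- u) + p) by rewrite -e.
  have Y1' : Y ((- t1) *: (- u) + p) by rewrite -e.
  have Q2' : Q ((- t2) *: (- u) + p) by rewrite -e.
  have nY2' : ~ Y ((- t2) *: (- u) + p) by rewrite -e.
  apply: (split2D_dir dl0 u0' _ QL' Q1' Y1' Q2' nY2' hsep).
  by rewrite ltrN2.
- by subst t2.
Qed.

Lemma diam_split (Q Ql Qr : set 'cV[R]_2) (M dl : R) :
  bnd Q M -> Ql `<=` Q -> Qr `<=` Q -> Ql !=set0 -> Qr !=set0 ->
  (forall a a' b b', Ql a -> Ql a' -> Qr b -> Qr b' ->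
      exists c c', [/\ Q c, Q c' & edist a a' + edist b b' + dl <= edist c c']) ->
  diam Ql + diam Qr + dl <= diam Q.
Proof.
move=> hb sl sr nl nr h.
have h1 : forall a a', Ql a -> Ql a' -> diam Qr <= diam Q - dl - edist a a'.
  move=> a a' la la'; apply: diam_le => // b b' rb rb'.
  have [c [c' [Qc Qc' hc]]] := h a a' b b' la la' rb rb'.
  have := diam_ub hb Qc Qc'; lra.
have h2 : diam Ql <= diam Q - dl - diam Qr.
  apply: diam_le => // a a' la la'; have := h1 a a' la la'; lra.
lra.
Qed.

End Split2.
Section Scale.
Variable R : realType.
Implicit Types p q u : 'cV[R]_2.

Lemma diam_scale (U : set 'cV[R]_2) (f : 'cV[R]_2 -> 'cV[R]_2) (M sg : R) :
  bnd U M -> 0 <= sg ->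
  (forall y z, U y -> U z -> edist (f y) (f z) = sg * edist y z) ->
  diam (f @` U) = sg * diam U.
Proof.
move=> hb sg0 hf.
have [->|/set0P [y0 Uy0]] := eqVneq U set0.
  by rewrite image_set0 !diam_set0 mulr0.
have hbf : bnd (f @` U) (sg * M).
  by move=> _ _ [y Uy <-] [z Uz <-]; rewrite hf // ler_wpM2l // hb.
have Uf0 : (f @` U) !=set0 by exists (f y0); exists y0.
apply/eqP; rewrite eq_le; apply/andP; split.
  apply: diam_le => // _ _ [y Uy <-] [z Uz <-].
  by rewrite hf // ler_wpM2l // (diam_ub hb).
have [->|sgp] := eqVneq sg 0.
  by rewrite mul0r (diam_ge0 hbf).
have sg0' : 0 < sg by rewrite lt_neqAle eq_sym sgp.
rewrite -ler_pdivlMl //; apply: diam_le; first by exists y0.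
move=> y z Uy Uz.
rewrite ler_pdivlMl // -hf //; apply: (diam_ub hbf); [exists y|exists z] => //.
Qed.

Lemma affine_line_scale (B : 'M[R]_2) (w p' u' y z : 'cV[R]_2) :
  u' != 0 -> Lset p' u' y -> Lset p' u' z ->
  edist (affine_map B w y) (affine_map B w z) =
  (enorm (B *m u') / enorm u') * edist y z.
Proof.
move=> u0 /LsetP [t ->] /LsetP [t' ->].
have en0 : enorm u' != 0 by apply/eqP => /enorm_eq0 /eqP; rewrite (negbTE u0).
rewrite edist_line /Defs.edist /affine_map.
have -> : B *m (t *: u' + p') + w - (B *m (t' *: u' + p') + w) = (t - t') *: (B *m u').
  have H : forall x1 y1 c : 'cV[R]_2, (x1 + c) - (y1 + c) = x1 - y1.
    by move=> x1 y1 c; rewrite opprD addrACA subrr addr0.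
  by rewrite !mulmxDr -!scalemxAr !H scalerBl.
by rewrite enormZ; field.
Qed.

End Scale.
Section Core.
Variables (R : realType) (N : nat) (A : 'I_N -> 'M[R]_2) (v : 'I_N -> 'cV[R]_2)
  (X : set 'cV[R]_2) (lam D dl : R).
Hypotheses (hAu : forall i, A i \in unitmx) (hlam0 : 0 <= lam)
  (hlam : forall i, opnorm (A i) <= lam)
  (hD0 : 0 < D) (hXD : bnd X D) (hdl : 0 < dl)
  (hcov : forall z, X z -> exists i, (affine_map (A i) (v i) @` X) z)
  (hsep : forall i a b, (affine_map (A i) (v i) @` X) a -> X b ->
     ~ (affine_map (A i) (v i) @` X) b -> dl <= edist a b).

Definition sexp := D / (D + dl).

Lemma sexp_gt0 : 0 < sexp.
Proof. by rewrite /sexp divr_gt0 // addr_gt0. Qed.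

Lemma sexp_lt1 : sexp < 1.
Proof. by rewrite /sexp ltr_pdivrMr ?addr_gt0 // mul1r ltrDl. Qed.

Definition goodcover (Q : set 'cV[R]_2) (r : R) (m : nat) (C : nat -> set 'cV[R]_2) :=
  [/\ (forall k, (k < m)%N -> C k `<=` Q),
      Q `<=` (fun z => exists2 k, (k < m)%N & C k z),
      (forall k, (k < m)%N -> diam (C k) <= r) &
      \sum_(0 <= k < m) diam (C k) `^ sexp <= diam Q `^ sexp].

Definition Cov (n : nat) := forall p u (Q : set 'cV[R]_2), u != 0 -> Q `<=` X ->
  Q `<=` Lset p u -> Q !=set0 -> exists m C, goodcover Q (lam ^+ n * D) m C.

Lemma diam_X_ge0 Q : Q `<=` X -> 0 <= diam Q.
Proof. by move=> QX; apply: (diam_ge0 (bnd_sub QX hXD)). Qed.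

Lemma Cov0 : Cov 0.
Proof.
move=> p u Q u0 QX QL Q0; exists 1%N, (fun _ => Q); rewrite /goodcover; split.
- by move=> k _.
- by move=> z Qz; exists 0%N.
- by move=> k _; rewrite expr0 mul1r; apply: diam_le => //; exact: bnd_sub QX hXD.
- by rewrite big_nat1.
Qed.


Lemma single n i p u (Q : set 'cV[R]_2) : Cov n -> u != 0 -> Q `<=` X ->
  Q `<=` Lset p u -> Q !=set0 ->
  Q `<=` affine_map (A i) (v i) @` X -> exists m C, goodcover Q (lam ^+ n.+1 * D) m C.
Proof.
move=> hn u0 QX QL Q0.
set B := A i; set w := v i; set phi := affine_map B w; move=> Qc.
have Bu : B \in unitmx := hAu i.
pose Q' := [set y | X y /\ Q (phi y)].
pose u' := invmx B *m u; pose p' := invmx B *m (p - w).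
have u0' : u' != 0.
  apply: contra u0 => /eqP h; apply/eqP.
  by rewrite -(mulKVmx Bu u) -/u' h mulmx0.
have Q'L : Q' `<=` Lset p' u'.
  move=> y [Xy /QL /LsetP [t et]]; apply/LsetP; exists t.
  have : B *m y = t *: u + p - w by rewrite -et /phi /affine_map addrK.
  move=> /(congr1 (mulmx (invmx B))); rewrite mulKmx // => ->.
  by rewrite /u' /p' -addrA mulmxDr scalemxAr.
have Q'X : Q' `<=` X by move=> y [].
have Q'0 : Q' !=set0.
  by have [q Qq] := Q0; have [y Xy ey] := Qc q Qq; exists y; split => //; rewrite ey.
have [m [C' [hsub hcov' hdiam hsum]]] := hn p' u' Q' u0' Q'X Q'L Q'0.
set sg := enorm (B *m u') / enorm u'.
have en0 : 0 < enorm u'.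
  rewrite lt_neqAle enorm_ge0 andbT eq_sym; apply/eqP => /enorm_eq0 /eqP.
  by rewrite (negbTE u0').
have sg0 : 0 <= sg by rewrite divr_ge0 ?enorm_ge0.
have sgl : sg <= lam.
  rewrite /sg ler_pdivrMr //; apply: (le_trans (opnorm_bound _ _)).
  by apply: ler_wpM2r; [exact: enorm_ge0 | exact: hlam].
have hscale : forall U, U `<=` Q' -> diam (phi @` U) = sg * diam U.
  move=> U UQ; apply: (diam_scale (bnd_sub (subset_trans UQ Q'X) hXD) sg0).
  by move=> y z Uy Uz; apply: affine_line_scale => //; apply: Q'L; exact: UQ.
have eQ : phi @` Q' = Q.
  apply/seteqP; split; first by move=> _ [y [_ Qy] <-].
  by move=> q Qq; have [y Xy ey] := Qc q Qq; exists y => //; split => //; rewrite ey.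
have dC : forall k, (k < m)%N -> 0 <= diam (C' k).
  by move=> k km; apply: diam_X_ge0; apply: (subset_trans (hsub k km) Q'X).
exists m, (fun k => phi @` C' k); rewrite /goodcover; split.
- by move=> k km _ [y Cy <-]; have [] := hsub k km y Cy.
- move=> q Qq; have [y Xy ey] := Qc q Qq.
  have Q'y : Q' y by split => //; rewrite ey.
  by have [k km Cy] := hcov' y Q'y; exists k => //; exists y.
- move=> k km; rewrite (hscale _ (hsub k km)).
  have -> : lam ^+ n.+1 * D = lam * (lam ^+ n * D) by rewrite GRing.exprS mulrA.
  by apply: ler_pM; [exact: sg0 | exact: dC | exact: sgl | exact: hdiam].
- have E : \sum_(0 <= k < m) diam (phi @` C' k) `^ sexp =
      sg `^ sexp * \sum_(0 <= k < m) diam (C' k) `^ sexp.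
    rewrite mulr_sumr; apply: eq_big_nat => j /andP[_ jm].
    by rewrite /= (hscale _ (hsub j jm)) powRM // dC.
  rewrite E -eQ hscale // powRM ?diam_X_ge0 //.
  by rewrite ler_wpM2l ?powR_ge0.
Qed.

Lemma step n : Cov n -> Cov n.+1.
Proof.
move=> hn.
suff H : forall k : nat, forall p u (Q : set 'cV[R]_2), u != 0 -> Q `<=` X ->
    Q `<=` Lset p u -> Q !=set0 -> diam Q < k%:R * dl ->
    exists m C, goodcover Q (lam ^+ n.+1 * D) m C.
  move=> p u Q u0 QX QL Q0; apply: (H (Num.Def.trunc (diam Q / dl)).+1 p u Q u0 QX QL Q0).
  by rewrite -ltr_pdivrMr // truncnS_gt.
elim=> [|k IH] p u Q u0 QX QL Q0 hk.
  by exfalso; move: hk; rewrite mul0r ltNge diam_X_ge0.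
have [q1 Qq1] := Q0.
have [i ci] := hcov (QX _ Qq1).
have [Qsub|nsub] := pselect (Q `<=` affine_map (A i) (v i) @` X).
  exact: (single hn u0 QX QL Q0 Qsub).
have [q2 [Qq2 nq2]] : exists q2, Q q2 /\ ~ (affine_map (A i) (v i) @` X) q2.
  apply: contrapT => hno; apply: nsub => z Qz; apply: contrapT => nz.
  by apply: hno; exists z.
have [Ql [Qr [[sl sr] nl nr cQ hd]]] := split2D hdl u0 QL Qq1 ci Qq2 nq2
  (fun a b Qa Qb Ya nYb => hsep Ya (QX _ Qb) nYb).
have hdiam := diam_split (bnd_sub QX hXD) sl sr nl nr hd.
have dl0 := diam_X_ge0 (subset_trans sl QX).
have dr0 := diam_X_ge0 (subset_trans sr QX).
have hk' : diam Q < k%:R * dl + dl by move: hk; rewrite -addn1 natrD mulrDl mul1r.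
have hkl : diam Ql < k%:R * dl by lra.
have hkr : diam Qr < k%:R * dl by lra.
have [m1 [C1 [s1 c1 d1 sum1]]] :=
  IH p u Ql u0 (subset_trans sl QX) (subset_trans sl QL) nl hkl.
have [m2 [C2 [s2 c2 d2 sum2]]] :=
  IH p u Qr u0 (subset_trans sr QX) (subset_trans sr QL) nr hkr.
exists (m1 + m2)%N, (fun j => if (j < m1)%N then C1 j else C2 (j - m1)%N).
rewrite /goodcover; split.
- move=> j jm; case: ifP => hj; first by apply: subset_trans (s1 _ hj) sl.
  have hj' : (m1 <= j)%N by rewrite leqNgt hj.
  by apply: subset_trans (s2 _ _) sr; rewrite ltn_subLR.
- move=> z Qz; case: (cQ z Qz) => [/c1 [j jm Cj]|/c2 [j jm Cj]].
    by exists j; [exact: ltn_addr | rewrite jm].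
  exists (m1 + j)%N; first by rewrite ltn_add2l.
  by rewrite ltnNge leq_addr /= addKn.
- move=> j jm; case: ifP => hj; first exact: d1.
  have hj' : (m1 <= j)%N by rewrite leqNgt hj.
  by apply: d2; rewrite ltn_subLR.
- rewrite (@big_cat_nat _ _ _ m1) //; last exact: leq_addr.
  have e1 : \sum_(0 <= j < m1) diam (if (j < m1)%N then C1 j else C2 (j - m1)%N) `^ sexp
      = \sum_(0 <= j < m1) diam (C1 j) `^ sexp.
    by apply: eq_big_nat => j /andP[_ jm]; rewrite jm.
  have e2 : \sum_(m1 <= j < m1 + m2) diam (if (j < m1)%N then C1 j else C2 (j - m1)%N) `^ sexp
      = \sum_(0 <= j < m2) diam (C2 j) `^ sexp.
    rewrite -{1}(add0n m1) big_addn addKn; apply: eq_big_nat => j _.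
    by rewrite ltnNge leq_addl /= addnK.
  rewrite e1 e2; apply: (le_trans (lerD sum1 sum2)).
  have hQD : diam Q <= D by apply: diam_le => //; exact: bnd_sub QX hXD.
  have hle : diam Ql + diam Qr + dl <= D by lra.
  have := key_ineq dl0 dr0 hdl hle; rewrite -/sexp => hk2.
  apply: (le_trans hk2); apply: ge0_ler_powR => //.
  - exact: ltW sexp_gt0.
  - by rewrite nnegrE; apply: addr_ge0; [exact: addr_ge0 | exact: ltW].
  - by rewrite nnegrE; exact: diam_X_ge0.
Qed.

Lemma Cov_all n : Cov n.
Proof. by elim: n => [|n IH]; [exact: Cov0 | exact: step]. Qed.

End Core.
Section Cont.
Variable R : realType.

Lemma contD' (T : topologicalType) (f g : T -> R) x :
  continuous_at x f -> continuous_at x g ->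
  continuous_at x (fun y => f y + g y).
Proof. exact: (@continuousD _ _ _ f g x). Qed.

Lemma contB' (T : topologicalType) (f g : T -> R) x :
  continuous_at x f -> continuous_at x g ->
  continuous_at x (fun y => f y - g y).
Proof. exact: (@continuousB _ _ _ f g x). Qed.

Lemma contM' (T : topologicalType) (f g : T -> R) x :
  continuous_at x f -> continuous_at x g ->
  continuous_at x (fun y => f y * g y).
Proof. exact: (@continuousM _ _ f g x). Qed.

Lemma cont_entry (M : 'M[R]_2) (w : 'cV[R]_2) (i : 'I_2) :
  continuous (fun x : 'cV[R]_2 => (M *m x + w) i 0).
Proof.
have -> : (fun x : 'cV[R]_2 => (M *m x + w) i 0) =
   (fun x => M i ord0 * x ord0 0 + M i (lift ord0 ord0) * x (lift ord0 ord0) 0 + w i 0).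
  by apply: funext => x; rewrite !mxE sum2.
move=> x. apply: contD'; last exact: cst_continuous.
apply: contD'; apply: contM'; try exact: cst_continuous;
  exact: coord_continuous.
Qed.

Lemma cont_pair (M1 M2 : 'M[R]_2) (w1 w2 : 'cV[R]_2) :
  continuous (fun x : 'cV[R]_2 * 'cV[R]_2 =>
    edist (affine_map M1 w1 x.1) (affine_map M2 w2 x.2)).
Proof.
move=> x.
rewrite /Defs.edist /enorm.
apply: continuous_comp; last exact: sqrt_continuous.
pose a (k : 'I_2) (x0 : 'cV[R]_2 * 'cV[R]_2) := (M1 *m x0.1 + w1) k 0 - (M2 *m x0.2 + w2) k 0.
have -> : (fun x0 : 'cV[R]_2 * 'cV[R]_2 =>
   \sum_(i < 2) (affine_map M1 w1 x0.1 - affine_map M2 w2 x0.2) i 0 ^+ 2) =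
  (fun x0 => a ord0 x0 * a ord0 x0 + a (lift ord0 ord0) x0 * a (lift ord0 ord0) x0).
  by apply: funext => y; rewrite sum2 !expr2 /a !mxE.
have hc : forall k, continuous_at x (a k).
  move=> k; rewrite /a; apply: contB'.
  - apply: (@continuous_comp _ _ _ fst (fun y : 'cV[R]_2 => (M1 *m y + w1) k 0)).
      exact: cvg_fst.
    exact: cont_entry.
  - apply: (@continuous_comp _ _ _ snd (fun y : 'cV[R]_2 => (M2 *m y + w2) k 0)).
      exact: cvg_snd.
    exact: cont_entry.
by apply: contD'; apply: contM'.
Qed.

End Cont.
Section Assembly.
Variable R : realType.

Lemma fin_pos (I : finType) (P : I -> R -> Prop) :
  (forall i x y, 0 < y -> y <= x -> P i x -> P i y) ->
  (forall i, exists2 x, 0 < x & P i x) ->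
  exists2 x, 0 < x & forall i, P i x.
Proof.
move=> mono H.
suff: forall s : seq I, exists2 x, 0 < x & forall i, i \in s -> P i x.
  by move=> /(_ (enum I)) [x x0 hx]; exists x => // i; apply: hx; rewrite mem_enum.
elim=> [|j s [x x0 hx]]; first by exists 1.
have [y y0 hy] := H j.
have m0 : 0 < Order.min x y by rewrite lt_min x0 y0.
exists (Order.min x y) => // i; rewrite inE => /orP[/eqP ->|iS].
  by apply: (mono _ y) => //; rewrite ge_min lexx orbT.
by apply: (mono _ x) => //; [rewrite ge_min lexx | apply: hx].
Qed.

Variables (N : nat) (A : 'I_N -> 'M[R]_2) (v : 'I_N -> 'cV[R]_2) (X : set 'cV[R]_2).
Hypotheses (X0 : X !=set0) (cX : compact X)
  (hcov : forall z, X z -> exists i, (affine_map (A i) (v i) @` X) z)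
  (hdisj : forall i j, i != j ->
     affine_map (A i) (v i) @` X `&` affine_map (A j) (v j) @` X = set0).

Lemma XX_min (M1 M2 : 'M[R]_2) (w1 w2 : 'cV[R]_2) :
  exists2 c, (X `*` X) c & forall y z, X y -> X z ->
    edist (affine_map M1 w1 c.1) (affine_map M2 w2 c.2) <=
    edist (affine_map M1 w1 y) (affine_map M2 w2 z).
Proof.
have [x0 Xx0] := X0.
have ne : (X `*` X) !=set0 by exists (x0, x0).
have [c cin hc] := compact_EVT_min ne (compact_setX cX cX)
  (continuous_subspaceT (@cont_pair R M1 M2 w1 w2)).
exists c; first by move: cin; rewrite inE.
by move=> y z Xy Xz; apply: (hc (y, z)); rewrite inE.
Qed.

Lemma XX_max (M1 M2 : 'M[R]_2) (w1 w2 : 'cV[R]_2) :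
  exists2 c, (X `*` X) c & forall y z, X y -> X z ->
    edist (affine_map M1 w1 y) (affine_map M2 w2 z) <=
    edist (affine_map M1 w1 c.1) (affine_map M2 w2 c.2).
Proof.
have [x0 Xx0] := X0.
have ne : (X `*` X) !=set0 by exists (x0, x0).
have [c cin hc] := compact_EVT_max ne (compact_setX cX cX)
  (continuous_subspaceT (@cont_pair R M1 M2 w1 w2)).
exists c; first by move: cin; rewrite inE.
by move=> y z Xy Xz; apply: (hc (y, z)); rewrite inE.
Qed.

Lemma sep_exists : exists2 dl, 0 < dl & forall i a b,
  (affine_map (A i) (v i) @` X) a -> X b ->
  ~ (affine_map (A i) (v i) @` X) b -> dl <= edist a b.
Proof.
pose P := fun (ij : 'I_N * 'I_N) (x : R) => ij.1 != ij.2 -> forall y z, X y -> X z ->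
  x <= edist (affine_map (A ij.1) (v ij.1) y) (affine_map (A ij.2) (v ij.2) z).
have [dl dl0 hdl] : exists2 x, 0 < x & forall ij, P ij x.
  apply: fin_pos.
    by move=> ij x y y0 yx hx hne a b Xa Xb; apply: (le_trans yx); apply: hx.
  move=> [i j]; have [->|ij] := eqVneq i j.
    by exists 1 => //; rewrite /P /= eqxx.
  have [c [Xc1 Xc2] hc] := XX_min (A i) (A j) (v i) (v j).
  exists (edist (affine_map (A i) (v i) c.1) (affine_map (A j) (v j) c.2)).
    rewrite lt_neqAle edist_ge0 andbT eq_sym; apply/eqP => /edist_eq0 e.
    have : (affine_map (A i) (v i) @` X `&` affine_map (A j) (v j) @` X)
      (affine_map (A i) (v i) c.1).
      by split; [exists c.1 | rewrite e; exists c.2].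
    by rewrite hdisj.
  by move=> _ y z Xy Xz; apply: hc.
exists dl => // i a b [y Xy <-] Xb nb.
have [j [z Xz ez]] := hcov Xb.
have ij : i != j by apply/eqP => eij; apply: nb; rewrite eij -ez; exists z.
rewrite -ez; exact: (hdl (i, j) ij y z Xy Xz).
Qed.

Lemma bound_exists : exists2 D, 0 < D & bnd X D.
Proof.
have [c [Xc1 Xc2] hc] := XX_max 1%:M 1%:M 0 0.
set D0 := edist _ _ in hc.
have D00 : 0 <= D0 by apply: edist_ge0.
exists (D0 + 1); first by rewrite ltr_wpDl.
move=> y z Xy Xz; have := hc y z Xy Xz; rewrite /affine_map !mul1mx !addr0 => h.
by apply: (le_trans h); rewrite lerDl.
Qed.

End Assembly.

Lemma lam_exists (R : realType) (N : nat) (A : 'I_N -> 'M[R]_2) :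
  (forall i, opnorm (A i) < 1) ->
  exists lam, [/\ 0 <= lam, lam < 1 & forall i, opnorm (A i) <= lam].
Proof.
move=> h.
have [x x0 hx] : exists2 x : R, 0 < x & forall i, opnorm (A i) <= 1 - x.
  apply: fin_pos.
    by move=> i a b b0 ba hb; apply: (le_trans hb); rewrite lerD2l lerN2.
  move=> i; exists (1 - opnorm (A i)); first by rewrite subr_gt0.
  by rewrite opprB addrC subrK.
exists (Order.max (1 - x) 0); split.
- by rewrite le_max lexx orbT.
- by rewrite gt_max ltr01 andbT ltrBlDr ltrDl.
- by move=> i; apply: (le_trans (hx i)); rewrite le_max lexx.
Qed.

Unset Implicit Arguments.

Theorem mainTheorem15 (R : realType) (N : nat) (A : 'I_N -> 'M[R]_2)
    (v : 'I_N -> 'cV[R]_2) (X : set 'cV[R]_2) :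
  (2 <= N)%N ->
  (forall i, A i \in unitmx) ->
  (forall i, opnorm (A i) < 1) ->
  X !=set0 -> compact X ->
  X = \bigcup_(i in [set: 'I_N]) (affine_map (A i) (v i) @` X) ->
  (forall i j, i != j -> affine_map (A i) (v i) @` X `&` affine_map (A j) (v j) @` X = set0) ->
  (ereal_sup [set dimH (X `&` translate (line_through0 u) x)
               | x in X & u in [set u : 'cV[R]_2 | u != 0%R]] < 1%:E)%E.
Proof.
move=> N2 hAu hA1 X0 cX hX hdisj.
have hcov : forall z, X z -> exists i, (affine_map (A i) (v i) @` X) z.
  move=> z Xz.
  have : (\bigcup_(i in [set: 'I_N]) (affine_map (A i) (v i) @` X)) z by rewrite -hX.
  by case=> i _ h; exists i.
have [dl dl0 hsep] := sep_exists X0 cX hcov hdisj.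
have [D D0 hXD] := bound_exists X0 cX.
have [lam [lam0 lam1 hlam]] := lam_exists hA1.
have hCov := Cov_all hAu hlam D0 hXD dl0 hcov hsep.
set s := sexp D dl.
have s0 : 0 < s by apply: sexp_gt0.
have s1 : s < 1 by apply: sexp_lt1.
set s' := (1 + s) / 2.
have s'0 : 0 < s' by rewrite /s'; lra.
have s'1 : s' < 1 by rewrite /s'; lra.
have ss' : 0 < s' - s by rewrite /s'; lra.
suff key : forall x u, X x -> u != 0 ->
    (dimH (X `&` translate (line_through0 u) x) <= s'%:E)%E.
  apply: (@le_lt_trans _ _ s'%:E); last by rewrite lte_fin.
  by apply: ge_ereal_sup => _ [x Xx [u /= u0 <-]]; apply: key.
move=> x u Xx u0; set Q := X `&` translate (line_through0 u) x.
have QX : Q `<=` X by move=> z [].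
have QL : Q `<=` Lset x u by move=> z [].
have Q0 : Q !=set0.
  by exists x; split => //; apply/LsetP; exists 0; rewrite scale0r add0r.
have QD : diam Q <= D by apply: diam_le => //; exact: bnd_sub QX hXD.
have dQ0 : 0 <= diam Q by apply: diam_ge0 (bnd_sub QX hXD).
have Hd : forall d0, 0 < d0 -> hausdorff_delta s' d0 Q = 0%E.
  move=> d0 d0p; apply/eqP; rewrite eq_le; apply/andP; split; last first.
    apply: le_ereal_inf_tmp => _ [U hU <-]; apply: nneseries_ge0 => k hk1 hk2.
    by case: (pselect (U k = set0)) => h; rewrite lee_fin ?powR_ge0.
  apply/lee_addgt0Pr => e e0; rewrite add0e.
  set eta := Order.min d0 ((e / D `^ s) `^ (s' - s)^-1).
  have Ds0 : 0 < D `^ s by apply: powR_gt0.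
  have eta0 : 0 < eta by rewrite lt_min d0p powR_gt0 // divr_gt0.
  have [n hn] := exists_pow_small (ltac:(by rewrite lam0 lam1) : 0 <= lam < 1)
    (divr_gt0 eta0 D0).
  set r := lam ^+ n * D.
  have r0 : 0 <= r by rewrite /r mulr_ge0 ?exprn_ge0 // ltW.
  have reta : r <= eta by rewrite /r -ler_pdivlMr.
  have [m [C [hsub hcv hdm hsum]]] := hCov n x u Q u0 QX QL Q0.
  pose U k := if (k < m)%N then C k else set0.
  have hdc : delta_cover d0 Q U.
    split.
      move=> z Qz; have [k km Ck] := hcv z Qz; exists k => //.
      by rewrite /U km.
    move=> k p q; rewrite /U; case: ifP => km // Cp Cq.
    have hb := bnd_sub (subset_trans (hsub k km) QX) hXD.
    apply: (le_trans (diam_ub hb Cp Cq)); apply: (le_trans (hdm k km)).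
    by apply: (le_trans reta); rewrite ge_min lexx.
  apply: (@le_trans _ _ (cover_cost s' U)).
    by apply: ereal_inf_lbound; exists U.
  have dC : forall k, (k < m)%N -> 0 <= diam (C k).
    by move=> k km; apply: diam_ge0 (bnd_sub (subset_trans (hsub k km) QX) hXD).
  rewrite /cover_cost (nneseries_split 0 m); last first.
    by move=> k _; case: (pselect (U k = set0)) => h; rewrite lee_fin ?powR_ge0.
  rewrite add0n eseries0 ?adde0; last first.
    move=> k mk _; have km : (k < m)%N = false by rewrite ltnNge mk.
    rewrite /U km; case: (pselect (@set0 'cV[R]_2 = set0)) => h //.
  rewrite sumEFin lee_fin.
  have hterm : forall k, (0 <= k < m)%N ->
      (if pselect (U k = set0) then 0 else diam (U k) `^ s') <=
      r `^ (s' - s) * diam (C k) `^ s.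
    move=> k /andP[_ km]; rewrite /U km; case: (pselect (C k = set0)) => h.
      by rewrite mulr_ge0 ?powR_ge0.
    have e1 : diam (C k) `^ s' = diam (C k) `^ s * diam (C k) `^ (s' - s).
      rewrite -powRD; first by rewrite addrC subrK.
      by rewrite addrC subrK (gt_eqF s'0).
    rewrite e1 mulrC ler_wpM2r ?powR_ge0 //.
    apply: ge0_ler_powR; rewrite ?nnegrE //; [exact: ltW | exact: dC | exact: hdm].
  apply: (le_trans (ler_sum_nat hterm)); rewrite -mulr_sumr.
  apply: (@le_trans _ _ (r `^ (s' - s) * D `^ s)).
    apply: ler_wpM2l; first exact: powR_ge0.
    apply: (le_trans hsum); apply: ge0_ler_powR; rewrite ?nnegrE //;
      [exact: ltW | exact: ltW].
  rewrite -ler_pdivlMr //.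
  apply: (@le_trans _ _ (eta `^ (s' - s))).
    by apply: ge0_ler_powR; rewrite ?nnegrE //; [exact: ltW | exact: ltW].
  apply: (@le_trans _ _ (((e / D `^ s) `^ (s' - s)^-1) `^ (s' - s))).
    apply: ge0_ler_powR; rewrite ?nnegrE ?powR_ge0 //; [exact: ltW | exact: ltW |].
    by rewrite ge_min lexx orbT.
  by rewrite -powRrM mulVf ?gt_eqF // powRr1 // divr_ge0 // ltW.
have H0 : hausdorff_measure s' Q = 0%E.
  rewrite /hausdorff_measure; apply/eqP; rewrite eq_le; apply/andP; split.
    by apply: ge_ereal_sup => _ [d0 d0p <-]; rewrite (Hd d0 d0p).
  by apply: ereal_sup_ubound; exists 1; [exact: ltr01 | exact: Hd ltr01].
apply: ereal_inf_lbound; exists s' => //; split => //; exact: ltW.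
Qed.
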